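(* Let $G=(V,E)$ be an undirected graph with edge weights $w:E\to[0,1]$, node demands $x:V\to[0,1]$, and distinct node lengths $d(v)$, such that \[\forall u\in V:\quad x(u)+\sum_{\{v\in V:d(v)>d(u)\}}w(v,u)\,x(v)\le1.\] Then for every positive integer $T$ there is a multi-coloring $\pi:V\to2^{\{0,\dots,T-1\}}$ such that (1) for every $c\in\{0,\dots,T-1\}$ and every $u\in\pi^{-1}(c)$: $\sum_{\{v\in\pi^{-1}(c):d(v)>d(u)\}}w(v,u)\le1$; (2) for every $u\in V$: $|\pi(u)|\ge\lfloor x(u)\cdot T\rfloor$.
   Context: $\pi^{-1}(c)=\{v\in V: c\in\pi(v)\}$. For $u,v\in V$, $w(v,u)$ denotes the weight of the edge $\{u,v\}$ (taken to be $0$ if $\{u,v\}\notin E$). *)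

(* Defs.v *)
From mathcomp Require Import all_boot all_order all_algebra.
Set Implicit Arguments. Unset Strict Implicit. Unset Printing Implicit Defensive.
Import Order.TTheory GRing.Theory Num.Theory.
Local Open Scope ring_scope.

(* A weighted undirected simple graph on a finite vertex type V is encoded by a
   symmetric weight function w : V -> V -> R with w v v = 0, where w v u is the
   weight of edge {u,v} and is 0 when {u,v} is not an edge (as in the paper). *)
Definition weighted_graph (R : numDomainType) (V : finType) (w : V -> V -> R) :=
  (forall u v, w u v = w v u) /\ (forall v, w v v = 0) /\
  (forall u v, 0 <= w u v <= 1).

Definition color_class (V : finType) (T : nat) (pi : V -> {set 'I_T}) (c : 'I_T)
  : {set V} := [set v | c \in pi v].

(* Main.v *)
Require Import Defs.
From mathcomp Require Import all_boot all_order all_algebra.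
From mathcomp Require Import zify ring lra.
Import Order.TTheory GRing.Theory Num.Theory.
Local Open Scope ring_scope.

Lemma choose_colors (R : archiRealFieldType) (T : nat) (L : 'I_T -> R) (y : R) :
  (forall c, 0 <= L c) -> 0 <= y <= 1 ->
  \sum_c L c <= T%:R * (1 - y) ->
  exists C : {set 'I_T}, [/\ #|C|%:R <= y * T%:R,
     Num.floor (y * T%:R) <= (#|C|)%:Z & forall c, c \in C -> L c <= 1].
Proof.
move=> L0 /andP[y0 y1] Hs.
set G := [set c | L c <= 1].
have HG : y * T%:R <= #|G|%:R.
  have Hb : #|~: G|%:R <= \sum_c L c.
    rewrite (bigID (fun c => c \in G)) /= -[X in X <= _]add0r.
    apply: lerD; first by apply: sumr_ge0.
    rewrite -sum1_card natr_sum (eq_bigl (fun c => c \notin G)); last by move=> c; rewrite in_setC.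
    apply: ler_sum => c.
    rewrite inE -ltNge => /ltW //.
  have := cardsC G; rewrite card_ord => HT.
  have : (#|G| + #|~: G|)%:R = T%:R :> R by rewrite HT.
  rewrite natrD => E. lra.
set k := Num.truncn (y * T%:R).
have yT0 : 0 <= y * T%:R by apply: mulr_ge0.
have kle : (k <= #|G|)%N.
  rewrite truncn_le_nat. apply: (le_lt_trans HG). by rewrite ltr_nat.
exists [set c in take k (enum G)].
have Hc : #|[set c in take k (enum G)]| = k.
  rewrite cardsE (card_uniqP _) ?take_uniq ?enum_uniq //.
  by rewrite size_takel // -cardE.
rewrite Hc; split.
- by rewrite truncn_le.
- have := truncnS_gt (y * T%:R); rewrite -/k => H.
  have := floor_le (y * T%:R) => H2.
  have : (Num.floor (y * T%:R))%:~R < (k.+1)%:R :> R by apply: le_lt_trans H.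
  rewrite -[(k.+1)%:R]/((k.+1)%:Z%:~R) ltr_int. lia.
- move=> c; rewrite inE => /mem_take; by rewrite mem_enum inE.
Qed.

Theorem lemma5 (R : archiRealFieldType) (V : finType) (w : V -> V -> R)
  (x : V -> R) (d : V -> R) :
  weighted_graph w ->
  (forall v, 0 <= x v <= 1) ->
  injective d ->
  (forall u, x u + \sum_(v | d v > d u) w v u * x v <= 1) ->
  forall T : nat, (0 < T)%N ->
  exists pi : V -> {set 'I_T},
    (forall c : 'I_T, forall u, u \in color_class pi c ->
       \sum_(v in color_class pi c | d v > d u) w v u <= 1) /\
    (forall u, Num.floor (x u * T%:R) <= (#|pi u|)%:Z).
Proof.
move=> [wsym [wdiag w01]] x01 dinj Hx T T0.
have w0 : forall a b, 0 <= w a b by move=> a b; case/andP: (w01 a b).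
pose Inv (S : {set V}) (pi : V -> {set 'I_T}) :=
  [/\ forall v, v \notin S -> pi v = set0,
      forall v, #|pi v|%:R <= x v * T%:R,
      forall v, v \in S -> Num.floor (x v * T%:R) <= (#|pi v|)%:Z
    & forall c u, u \in color_class pi c ->
       \sum_(v in color_class pi c | d v > d u) w v u <= 1].
have main : forall n (S : {set V}), #|S| = n ->
    (forall a b, a \in S -> d a < d b -> b \in S) -> exists pi, Inv S pi.
  elim=> [|n IH] S cS up.
    have S0 : S = set0 by apply/eqP; rewrite -cards_eq0 cS.
    exists (fun _ => set0); split.
    - by [].
    - move=> v; rewrite cards0; apply: mulr_ge0; [by case/andP: (x01 v)|by []].
    - by move=> v; rewrite S0 inE.
    - by move=> c u; rewrite /color_class inE inE.
  have [u0 u0S] : exists u0, u0 \in S.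
    by apply/set0Pn; rewrite -cards_eq0 cS.
  case: (@arg_minP _ R _ u0 (fun v => v \in S) d u0S) => u uS umin.
  set S' := S :\ u.
  have cS' : #|S'| = n.
    by move: cS; rewrite (cardsD1 u S) uS => -[].
  have up' : forall a b, a \in S' -> d a < d b -> b \in S'.
    move=> a b; rewrite !inE => /andP[au aS] ab.
    rewrite (up a b aS ab) andbT; apply/eqP => bu; move: ab; rewrite bu.
    by rewrite ltNge umin.
  have [pi' [Hz Hle Hfl Hcl]] := IH S' cS' up'.
  have above : forall v, d u < d v -> v \in S'.
    move=> v uv; rewrite !inE (up u v uS uv) andbT.
    by apply/eqP => vu; move: uv; rewrite vu ltxx.
  pose L c := \sum_(v in color_class pi' c | d v > d u) w v u.
  have L0 : forall c, 0 <= L c by move=> c; apply: sumr_ge0.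
  have Ls : \sum_c L c <= T%:R * (1 - x u).
    have -> : \sum_c L c = \sum_(v | d u < d v) w v u * #|pi' v|%:R.
      rewrite /L.
      rewrite (eq_bigr (fun c => \sum_(v | d u < d v) (if c \in pi' v then w v u else 0))); last first.
        move=> c _; rewrite -big_mkcondr; apply: eq_bigl => v.
        by rewrite /color_class inE andbC.
      rewrite exchange_big /=; apply: eq_bigr => v _.
      by rewrite -big_mkcond /= sumr_const mulr_natr.
    apply: (le_trans (y := \sum_(v | d u < d v) w v u * x v * T%:R)).
      apply: ler_sum => v _; rewrite -mulrA; apply: ler_wpM2l; first exact: w0.
      exact: Hle.
    rewrite -mulr_suml mulrC; apply: ler_wpM2l; first by [].
    have := Hx u; lra.
  have [C [C1 C2 C3]] := @choose_colors R T L (x u) L0 (x01 u) Ls.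
  exists (fun v => if v == u then C else pi' v); split.
  - move=> v vS; have vu : v != u by apply: contraNneq vS => ->.
    by rewrite (negbTE vu) Hz // !inE (negbTE vS) andbF.
  - by move=> v /=; case: ifP => [/eqP -> //|_]; exact: Hle.
  - move=> v vS /=; case: ifP => [/eqP -> //|/negbT vu]; apply: Hfl; by rewrite !inE vu vS.
  - move=> c u'; rewrite /color_class inE.
    have Hcls : forall u'', d u <= d u'' ->
      \sum_(v in [set v | c \in (if v == u then C else pi' v)] | d u'' < d v) w v u''
      = \sum_(v in color_class pi' c | d u'' < d v) w v u''.
      move=> u'' uu''; apply: eq_bigl => v; rewrite /color_class !inE.
      case: eqP => // ->; rewrite ltNge uu'' !andbF //.
    case: eqP => [-> cC|/eqP u'u cu'].
      by rewrite Hcls // C3.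
    have u'S' : u' \in S'.
      apply: contraT => nS; by rewrite Hz // inE in cu'.
    rewrite Hcls; first by apply: Hcl; rewrite /color_class inE.
    by apply: umin; move: u'S'; rewrite inE => /andP[].
have [pi [_ _ H3 H4]] := main _ [set: V] erefl (fun a b _ _ => in_setT b).
by exists pi; split=> // u; apply: H3; rewrite in_setT.
Qed.
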